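(* Let $P$ be a set of primes and let $T$ be a map with $\mathcal O_T=s_P$. Let $k\ge1$ and write its prime decomposition as $k=\prod_{p\in P}p^{a_p}\cdot\prod_{p\in Q}p^{a_p}$, where $Q$ is the set of primes dividing $k$ that are not in $P$ (so $P\cap Q=\emptyset$). Then for every $n\ge1$, \[ \mathcal O_{T^k}(n)=\begin{cases}\displaystyle\prod_{p\in Q,\,p\mid n}p^{a_p}\cdot\prod_{p\in Q,\,p\nmid n}\sigma(p^{a_p}) & \text{if } p\nmid n \text{ for all } p\in P,\\[2mm] 0 & \text{if } p\mid n \text{ for some } p\in P,\end{cases} \] where $\sigma$ is the sum-of-divisors function.
   Context: For a map $T:X\to X$, $\mathcal O_T(n)$ denotes the number of closed orbits of length $n$ under $T$ (sets $\{x,Tx,\dots,T^{n-1}x\}$ with $T^nx=x$ of cardinality exactly $n$); $T^k$ is the $k$th iterate. For a set $P$ of primes, $s_P$ is the sequence with $s_P(n)=0$ if $p\mid n$ for some $p\in P$, and $s_P(n)=1$ otherwise. *)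

(* Defs.v *)
From HB Require Import structures.
From mathcomp Require Import all_boot all_order.
From mathcomp Require Import boolp classical_sets functions cardinality.
Set Implicit Arguments. Unset Strict Implicit. Unset Printing Implicit Defensive.
Local Open Scope classical_set_scope.

Definition orbit_set {X : Type} (T : X -> X) (n : nat) (x : X) : set X :=
  [set y | exists2 i, (i < n)%N & y = iter i T x].

Definition closed_orbits {X : Type} (T : X -> X) (n : nat) : set (set X) :=
  [set A | exists x, [/\ iter n T x = x, A = orbit_set T n x & (A #= `I_n)%card]].

(* O_T(n) = m : the number of closed orbits of length n is m. *)
Definition orbit_count_is {X : Type} (T : X -> X) (n m : nat) : Prop :=
  (closed_orbits T n #= `I_m)%card.

Definition sP (P : set nat) (n : nat) : nat :=
  if `[< exists2 p, P p & (p %| n)%N >] then 0%N else 1%N.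

Definition sigma (m : nat) : nat := (\sum_(d <- divisors m) d)%N.

(* Main.v *)
Require Import Defs.
From mathcomp Require Import all_boot all_order.
From mathcomp Require Import boolp classical_sets functions cardinality.
From mathcomp Require Import zify.
Local Open Scope classical_set_scope.

Section Dyn.
Context {X : Type} (f : X -> X).

Definition per (m : nat) (x : X) := (0 < m)%N /\ forall i, iter i f x = x <-> (m %| i)%N.

Lemma iter_cycle m x q : iter m f x = x -> iter (q * m) f x = x.
Proof. by move=> h; elim: q => [|q IH] //=; rewrite mulSn iterD IH h. Qed.

Lemma iter_mod {m x} i : iter m f x = x -> iter i f x = iter (i %% m) f x.
Proof. by move=> h; rewrite {1}(divn_eq i m) addnC iterD iter_cycle. Qed.

Lemma iter_comm i j x : iter i f (iter j f x) = iter j f (iter i f x).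
Proof. by rewrite -!iterD addnC. Qed.

Lemma per_fix {m x} : per m x -> iter m f x = x.
Proof. by case=> _ h; apply/h. Qed.

Lemma perE m x : (0 < m)%N -> iter m f x = x ->
  (forall i, (0 < i < m)%N -> iter i f x <> x) -> per m x.
Proof.
move=> m0 hm hmin; split=> // i; split=> [hi|/dvdnP[q ->]]; last exact: iter_cycle.
case: (posnP (i %% m)) => [/eqP//|hpos]; exfalso.
by apply: (hmin (i %% m)); [rewrite hpos ltn_pmod | rewrite -(iter_mod i hm)].
Qed.

Lemma iter_inj {m x i j} : per m x -> iter i f x = iter j f x -> i = j %[mod m].
Proof.
wlog h: i j / (i %% m <= j %% m)%N.
  move=> H; case: (leqP (i %% m) (j %% m)) => hij px e; first exact: H.
  by symmetry; apply: H => //; exact: ltnW.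
move=> px e; have m0 := (proj1 px); have hm := per_fix px.
set i' := i %% m in h *; set j' := j %% m in h *.
have e' : iter i' f x = iter j' f x by rewrite -!(iter_mod _ hm).
have h1 : iter (m - i') f (iter i' f x) = x.
  by rewrite -iterD subnK // ltnW // ltn_pmod.
have h2 : iter (j' - i') f x = x.
  have ej : iter j' f x = iter (j' - i') f (iter i' f x) by rewrite -iterD subnK.
  by rewrite -{2}h1 e' ej iter_comm h1.
move/((proj2 px)): h2 => /dvdn_leq hd.
have : (j' < m)%N by rewrite ltn_pmod.
case: (posnP (j' - i')) => [|/hd]; lia.
Qed.

Lemma per_iter {m x} i : per m x -> per m (iter i f x).
Proof.
move=> px; split; first exact: (proj1 px).
move=> j; split=> [e|/dvdnP[q ->]]; last by rewrite iter_comm iter_cycle // per_fix.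
have : j + i = 0 + i %[mod m] by apply: (iter_inj px); rewrite iterD e.
by move/eqP; rewrite eqn_modDr mod0n.
Qed.

Lemma per_uniq m m' x : per m x -> per m' x -> m = m'.
Proof.
move=> p1 p2; apply/eqP; rewrite eqn_dvd.
by apply/andP; split; [apply/(proj2 p1)/per_fix | apply/(proj2 p2)/per_fix].
Qed.

Lemma per_exists N x : (0 < N)%N -> iter N f x = x -> exists m, per m x.
Proof.
move=> N0 hN.
have exP : exists i, (0 < i)%N && `[< iter i f x = x >] by exists N; rewrite N0 asboolT.
case: (ex_minnP exP) => m /andP[m0 /asboolP hm] hmin.
exists m; apply: perE => // i /andP[i0 im] hi.
have := hmin i; rewrite i0 asboolT // => /(_ isT); lia.
Qed.

Lemma orbit_mem {m x} t : per m x -> orbit_set f m x (iter t f x).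
Proof.
move=> px; exists (t %% m); first by rewrite ltn_pmod // (proj1 px).
exact/iter_mod/per_fix.
Qed.

Lemma orbit_eq m x y : per m x -> orbit_set f m x y -> orbit_set f m y = orbit_set f m x.
Proof.
move=> px [i im ->]; apply/seteqP; split=> z [j jm ->].
  by rewrite -iterD; apply: orbit_mem px.
have -> : iter j f x = iter (j + (m - i)) f (iter i f x).
  rewrite -(iterD (j + (m - i)) i) -addnA subnK; last exact: ltnW.
  by rewrite (iterD j m) (per_fix px).
by apply: orbit_mem; apply: per_iter px.
Qed.

Lemma orbit_self m x : per m x -> orbit_set f m x x.
Proof. move=> px; exists 0%N; [exact: (proj1 px) | reflexivity]. Qed.

Lemma orbit_card {m x} : (0 < m)%N -> iter m f x = x ->
  (orbit_set f m x #= `I_m)%card <-> per m x.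
Proof.
move=> m0 hm; split=> [hc|px].
  apply: perE => // d /andP[d0 dm] hd.
  have sub : orbit_set f m x `<=` (fun i => iter i f x) @` `I_d.
    move=> z [i im ->]; exists (i %% d); first by rewrite /= ltn_pmod.
    by rewrite -(iter_mod _ hd).
  have : (`I_m #<= `I_d)%card.
    apply: (card_le_trans (B := orbit_set f m x)).
      by move: hc; rewrite card_eq_sym card_eq_le => /andP[].
    apply: card_le_trans (subset_card_le sub) _; exact: card_image_le.
  by rewrite card_le_II; lia.
have -> : orbit_set f m x = (fun i => iter i f x) @` `I_m.
  by apply/seteqP; split=> z [i im e]; exists i.
apply: inj_card_eq => i j; rewrite !in_setE /= => im jm e.
by have := iter_inj px e; rewrite !modn_small.
Qed.

Lemma closed_orbitsE n A : (0 < n)%N ->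
  closed_orbits f n A <-> exists x, per n x /\ A = orbit_set f n x.
Proof.
move=> n0; split=> [[x [hx -> hc]]|[x [px ->]]].
  by exists x; split=> //; apply/(orbit_card n0 hx).
exists x; split=> //; first exact: per_fix.
by apply/(orbit_card n0 (per_fix px)).
Qed.

End Dyn.

Lemma per_pow {X : Type} (f : X -> X) m k x : per f m x -> per (iter k f) (m %/ gcdn m k) x.
Proof.
move=> px; have m0 := (proj1 px); set d := gcdn m k.
have d0 : (0 < d)%N by rewrite gcdn_gt0 m0.
have em : m = (m %/ d) * d by rewrite divnK // dvdn_gcdl.
have ek : k = (k %/ d) * d by rewrite divnK // dvdn_gcdr.
have cop : coprime (m %/ d) (k %/ d).
  by rewrite /coprime -(eqn_pmul2r d0) mul1n muln_gcdl -em -ek.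
split; first by rewrite divn_gt0 // dvdn_leq // dvdn_gcdl.
move=> i; rewrite -iterM ((proj2 px)) {1}em {1}ek mulnA dvdn_pmul2r //.
by rewrite Gauss_dvdl.
Qed.


Section NT.
Variables (P : set nat) (n k : nat).
Definition al (p e : nat) : bool :=
  if p \in P then e == 0 else if p %| n then e == logn p k else e <= logn p k.

Lemma al_le p e : al p e -> e <= logn p k.
Proof.
by rewrite /al; case: (p \in P) => [/eqP->//|]; case: (p %| n) => [/eqP->|].
Qed.

Fixpoint Lr (r : seq nat) : seq nat :=
  if r is p :: r' then
    [seq p ^ e * d | e <- [seq e <- iota 0 (logn p k).+1 | al p e], d <- Lr r']
  else [:: 1].

Definition Lchar (r : seq nat) d := 0 < d /\
  (forall q, q \in r -> al q (logn q d)) /\ (forall q, q \notin r -> logn q d = 0).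

Lemma logn_pe q p e : prime p -> logn q (p ^ e) = if q == p then e else 0.
Proof. by move=> pp; rewrite lognX logn_prime //; case: eqP => _; rewrite ?muln1 ?muln0. Qed.

Lemma memL r : uniq r -> all prime r -> forall d, d \in Lr r <-> Lchar r d.
Proof.
elim: r => [|p r IH] ur ar d.
  rewrite /= inE; split=> [/eqP->|[d0 [_ h]]].
    by split=> //; split=> // q _; rewrite logn1.
  apply/eqP; apply: eqn_from_log => // q; rewrite logn1; exact: h.
case/andP: ur => pr ur; case/andP: ar => pp ar.
have pe0 e : 0 < p ^ e by rewrite expn_gt0 prime_gt0.
split.
  case/allpairsP => [[e d'] [eA dL ->]]; rewrite /= in dL *.
  move: eA; rewrite [(_, _).1]/= mem_filter mem_iota => /andP[ale _].
  have [d'0 [h1 h2]] := (IH ur ar d').1 dL.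
  split; first by rewrite muln_gt0 pe0 d'0.
  split=> q; rewrite lognM // logn_pe //.
    rewrite inE; case: eqP => [-> _|qp /= qr]; first by rewrite h2 ?addn0.
    by rewrite add0n; apply: h1.
  rewrite inE negb_or => /andP[qp qr]; rewrite (negbTE qp) add0n; exact: h2.
case=> d0 [h1 h2]; apply/allpairsP.
set e := logn p d.
have pd : p ^ e %| d by apply: pfactor_dvdnn.
have alp : al p e by apply: h1; rewrite inE eqxx.
exists (e, d %/ p ^ e); split.
- by rewrite mem_filter mem_iota /= add0n ltnS alp al_le.
- apply/(IH ur ar); split; first by rewrite divn_gt0 ?pe0 // dvdn_leq.
  split=> q; rewrite logn_div // logn_pe //.
    move=> qr; have qp : q != p by apply: contraNneq pr => <-.
    by rewrite (negbTE qp) subn0; apply: h1; rewrite inE qr orbT.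
  move=> qr; case: eqP => [->|qp]; first by rewrite subnn.
  rewrite subn0; apply: h2; rewrite inE negb_or qr andbT; exact/eqP.
- by rewrite mulnC divnK.
Qed.

Lemma uniqL r : uniq r -> all prime r -> uniq (Lr r).
Proof.
elim: r => [|p r IH] // /andP[pr ur] /andP[pp ar].
apply: allpairs_uniq; [by rewrite filter_uniq ?iota_uniq | exact: IH |].
move=> [e1 d1] [e2 d2] /allpairsP[[a1 b1] [/= _ hd1 [-> ->]]].
move=> /allpairsP[[a2 b2] [/= _ hd2 [-> ->]]] /= E.
have [d10 [_ h1]] := (memL _ ur ar b1).1 hd1.
have [d20 [_ h2]] := (memL _ ur ar b2).1 hd2.
have pe0 e : 0 < p ^ e by rewrite expn_gt0 prime_gt0.
have ea : a1 = a2.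
  have h : logn p (p ^ a1 * b1) = logn p (p ^ a2 * b2) by rewrite E.
  by rewrite !lognM ?pe0 ?d10 ?d20 // !logn_pe // eqxx h1 ?h2 // !addn0 in h.
move: E; rewrite ea => /eqP; rewrite eqn_pmul2l // => /eqP->//.
Qed.

Lemma sumL r : \sum_(d <- Lr r) d =
  \prod_(p <- r) \sum_(e <- iota 0 (logn p k).+1 | al p e) p ^ e.
Proof.
elim: r => [|p r IH]; first by rewrite big_seq1 big_nil.
rewrite big_allpairs_dep big_cons -IH big_distrl big_filter.
by apply: eq_bigr => e _; rewrite big_distrr.
Qed.

Lemma sigma_pe p a : prime p -> sigma (p ^ a) = \sum_(e <- iota 0 a.+1) p ^ e.
Proof.
move=> pp; rewrite /sigma.
have hperm : perm_eq (divisors (p ^ a)) [seq p ^ e | e <- iota 0 a.+1].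
  apply: uniq_perm; first exact: divisors_uniq.
    by rewrite map_inj_uniq ?iota_uniq //; apply: expnI; apply: prime_gt1.
  move=> d; rewrite -dvdn_divisors ?expn_gt0 ?prime_gt0 //.
  apply/idP/idP => [/(@dvdn_pfactor p d a pp) [e ea ->]|/mapP [e ea ->]].
    by apply/mapP; exists e => //; rewrite mem_iota.
  by apply/(@dvdn_pfactor p _ a pp); exists e => //; move: ea; rewrite mem_iota.
by rewrite (perm_big _ hperm) big_map.
Qed.

Lemma sum_al p : prime p ->
  \sum_(e <- iota 0 (logn p k).+1 | al p e) p ^ e =
  if p \in P then 1 else if p %| n then p ^ logn p k else sigma (p ^ logn p k).
Proof.
move=> pp; rewrite /al big_mkcond; set a := logn p k.
case: (p \in P).
  rewrite [iota 0 _]/= big_cons eqxx big1_seq ?addn0 ?expn0 // => e.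
  rewrite mem_iota => /andP[_ /andP[le1 _]]; rewrite ifN //; lia.
case: (p %| n).
  rewrite -addn1 iotaD big_cat /= big_seq1 eqxx big1_seq ?add0n ?addn0 // => e.
  rewrite mem_iota => /andP[_ /andP[_ ea]]; rewrite ifN //; lia.
rewrite sigma_pe //; apply: eq_big_seq => e; rewrite mem_iota => /andP[_ ea].
by rewrite ifT //; lia.
Qed.

Lemma prod_split r : all prime r ->
  \prod_(p <- r) \sum_(e <- iota 0 (logn p k).+1 | al p e) p ^ e =
  \prod_(p <- r | (p \notin P) && (p %| n)) p ^ logn p k *
  \prod_(p <- r | (p \notin P) && ~~ (p %| n)) sigma (p ^ logn p k).
Proof.
elim: r => [|p r IH]; first by rewrite !big_nil.
case/andP=> pp ar; rewrite big_cons sum_al // !big_cons IH //.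
case: (p \in P); case: (p %| n) => /=; [exact: mul1n | exact: mul1n | exact: mulnA | exact: mulnCA].
Qed.

Lemma logn_ndvd {q m} : ~~ (q %| m) -> logn q m = 0.
Proof.
move=> h; apply/eqP; rewrite -leqn0 leqNgt logn_gt0 mem_primes (negbTE h).
by rewrite !andbF.
Qed.

Lemma logn_notin {q} : q \notin primes k -> logn q k = 0.
Proof. by move=> h; apply/eqP; rewrite -leqn0 leqNgt logn_gt0. Qed.

Lemma L_props (HP : forall p, p \in P -> prime p)
  (hn : forall p, p \in P -> ~~ (p %| n)) (n0 : 0 < n) (k0 : 0 < k) g :
  g \in Lr (primes k) ->
  [/\ g %| k, gcdn (n * g) k = g & forall p, p \in P -> ~~ (p %| g)].
Proof.
move=> hg.
have [g0 [h1 h2]] := (memL _ (primes_uniq k) (all_prime_primes k) g).1 hg.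
have hle q : logn q g <= logn q k.
  by case: (boolP (q \in primes k)) => [/h1/al_le // | /h2 -> //].
split.
- apply/gcdn_idPl; apply: eqn_from_log => //; first by rewrite gcdn_gt0 g0.
  by move=> q; rewrite logn_gcd //; have := hle q; lia.
- apply: eqn_from_log => //; first by rewrite gcdn_gt0 muln_gt0 n0 g0.
  move=> q; rewrite logn_gcd ?muln_gt0 ?n0 ?g0 // lognM //.
  case: (boolP (q \in primes k)) => qk; last first.
    by have := h2 q qk; have := logn_notin qk; lia.
  have := h1 q qk; rewrite /al; case: (boolP (q \in P)) => qP.
    by move/eqP=> ->; rewrite (logn_ndvd (hn _ qP)); lia.
  case: (boolP (q %| n)) => qn; first by move/eqP=> ->; lia.
  by rewrite (logn_ndvd qn); lia.
- move=> p pP; apply/negP => pg.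
  have pg0 : 0 < logn p g by rewrite logn_gt0 mem_primes pg g0 HP.
  have pk : p \in primes k by rewrite -logn_gt0; have := hle p; lia.
  by have := h1 p pk; rewrite /al pP => /eqP; lia.
Qed.

Lemma L_of (k0 : 0 < k) (n0 : 0 < n) m g : 0 < m -> g = gcdn m k -> m = n * g ->
  (forall p, p \in P -> ~~ (p %| m)) -> g \in Lr (primes k).
Proof.
move=> m0 gE mE hm.
have g0 : 0 < g by rewrite gE gcdn_gt0 m0.
apply/(memL _ (primes_uniq k) (all_prime_primes k) g); split=> //.
have eg q : logn q g = minn (logn q m) (logn q k) by rewrite {1}gE logn_gcd.
have em q : logn q m = logn q n + logn q g by rewrite {1}mE lognM.
split=> q qk.
  rewrite /al; case: (boolP (q \in P)) => qP.
    by apply/eqP; have := eg q; rewrite (logn_ndvd (hm _ qP)); lia.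
  case: (boolP (q %| n)) => qn.
    have qn0 : 0 < logn q n.
      have qp : prime q by move: qk; rewrite mem_primes => /and3P[].
      by rewrite logn_gt0 mem_primes qp n0 qn.
    by apply/eqP; have := eg q; have := em q; lia.
  by have := eg q; lia.
by have := eg q; rewrite (logn_notin qk); lia.
Qed.
End NT.

Lemma card_I0 {Y : Type} (A : set Y) : (A #= `I_0)%card -> A = set0.
Proof. by rewrite II0 card_eq0 => /eqP. Qed.

Lemma card_I1 {Y : Type} (A : set Y) : (A #= `I_1)%card ->
  exists a, A a /\ forall b, A b -> b = a.
Proof.
move/pcard_eqP => [g].
have [a Aa ga] : (g @` A) 0%N by apply: 'surj_g.
exists a; split => // b Ab.
have gb : g b = 0%N by have := 'funS_g Ab; rewrite /= ltnS leqn0 => /eqP.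
by apply: 'inj_g; rewrite ?in_setE //; exact: (etrans gb (esym ga)).
Qed.

Arguments per_fix {X f m x}.
Arguments iter_inj {X f m x i j}.
Arguments per_iter {X f m x} i.
Arguments per_uniq {X f m m' x}.
Arguments orbit_mem {X f m x} t.
Arguments orbit_eq {X f m x y}.
Arguments orbit_self {X f m x}.

Lemma per_k {X : Type} (T : X -> X) k n y : (0 < k)%N -> per (iter k T) n y ->
  exists m, per T m y /\ m = n * gcdn m k.
Proof.
move=> k0 py.
have hy : iter (n * k) T y = y by rewrite iterM; exact: per_fix py.
have nk0 : (0 < n * k)%N by rewrite muln_gt0 (proj1 py) k0.
have [m pm] := per_exists T _ y nk0 hy.
exists m; split => //.
have := per_uniq py (per_pow T m k y pm) => ->.
by rewrite divnK // dvdn_gcdl.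
Qed.

Theorem lemma3p2 (X : Type) (T : X -> X) (P : set nat)
  (HP : forall p, P p -> prime p)
  (HT : forall n, (0 < n)%N -> orbit_count_is T n (sP P n))
  (k : nat) (hk : (0 < k)%N) :
  forall n, (0 < n)%N ->
    orbit_count_is (iter k T) n
      (if `[< exists2 p, P p & (p %| n)%N >] then 0%N
       else (\prod_(p <- primes k | (p \notin P) && (p %| n)) p ^ logn p k *
             \prod_(p <- primes k | (p \notin P) && ~~ (p %| n))
                sigma (p ^ logn p k))%N).
Proof.
move=> n n0; rewrite /orbit_count_is.
have H0 m : (0 < m)%N -> (exists2 p, P p & (p %| m)%N) -> forall x, ~ per T m x.
  move=> m0 hp x px; have := HT m m0; rewrite /orbit_count_is /sP (asboolT hp).
  move/card_I0 => E.
  have : closed_orbits T m (orbit_set T m x) by apply/(closed_orbitsE T m _ m0); exists x.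
  by rewrite E.
have H1 m : (0 < m)%N -> ~ (exists2 p, P p & (p %| m)%N) ->
   exists x0, per T m x0 /\ forall y, per T m y -> exists2 i, (i < m)%N & y = iter i T x0.
  move=> m0 hp; have := HT m m0; rewrite /orbit_count_is /sP (asboolF hp).
  move/card_I1 => [A [hA hu]].
  have [x0 [px0 eA]] := (closed_orbitsE T m A m0).1 hA.
  exists x0; split => // y py.
  have e : orbit_set T m y = A.
    by apply: hu; apply/(closed_orbitsE T m _ m0); exists y.
  by have := orbit_self py; rewrite e eA.
case: (pselect (exists2 p, P p & (p %| n)%N)) => hPn.
  rewrite (asboolT hPn) II0 card_eq0; apply/eqP/seteqP; split => // A hA.
  have [y [py _]] := (closed_orbitsE _ n A n0).1 hA.
  have [m [pm mE]] := per_k T k n y hk py.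
  have m0 : (0 < m)%N by exact: (proj1 pm).
  apply: (H0 m m0 _ y pm); case: hPn => p Pp pn; exists p => //.
  by rewrite mE dvdn_mulr.
rewrite (asboolF hPn).
have hn : forall p, p \in P -> ~~ (p %| n)%N.
  by move=> p; rewrite in_setE => Pp; apply/negP => pn; apply: hPn; exists p.
have HP' : forall p, p \in P -> prime p by move=> p; rewrite in_setE; exact: HP.
rewrite -(prod_split P n k _ (all_prime_primes k)) -(sumL P n k).
set L := Lr P n k (primes k).
have noP1 : ~ (exists2 p, P p & (p %| 1)%N).
  by case=> p /HP pp; rewrite dvdn1 => /eqP p1; move: pp; rewrite p1.
have [x1 _] := H1 1%N isT noP1.
have ex_base m : exists x0 : X, (0 < m)%N -> ~ (exists2 p, P p & (p %| m)%N) ->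
    per T m x0 /\ forall y, per T m y -> exists2 i, (i < m)%N & y = iter i T x0.
  case: (pselect ((0 < m)%N /\ ~ (exists2 p, P p & (p %| m)%N))) => [[m0 hp]|nh].
    by have [x0 h] := H1 m m0 hp; exists x0.
  by exists x1 => m0 hp; exfalso; apply: nh.
pose base m := projT1 (cid (ex_base m)).
have baseP m : (0 < m)%N -> ~ (exists2 p, P p & (p %| m)%N) ->
    per T m (base m) /\ forall y, per T m y -> exists2 i, (i < m)%N & y = iter i T (base m).
  exact: (projT2 (cid (ex_base m))).
have Lg g : g \in L -> [/\ (0 < g)%N, (g %| k)%N, gcdn (n * g) k = g &
    ~ (exists2 p, P p & (p %| n * g)%N)].
  move=> hg; have [gk gE gP] := L_props P n k HP' hn n0 hk g hg.
  split=> //; first exact: dvdn_gt0 gk.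
  case=> p Pp; rewrite Euclid_dvdM ?HP //; case/orP => [pn|pg].
    by move: (hn p); rewrite in_setE pn => /(_ Pp).
  by move: (gP p); rewrite in_setE pg => /(_ Pp).
pose S := [seq (g, j) | g <- L, j <- iota 0 g].
have memS z : z \in S <-> z.1 \in L /\ (z.2 < z.1)%N.
  split=> [/allpairsPdep [g [j [gL jg ->]]]|[zL zj]].
    by split=> //; move: jg; rewrite mem_iota.
  apply/allpairsPdep; exists z.1, z.2; split=> //; first by rewrite mem_iota.
  by case: z {zL zj}.
pose F (z : nat * nat) := orbit_set (iter k T) n (iter z.2 T (base (n * z.1))).
have perF z : z \in S -> per T (n * z.1) (base (n * z.1)) /\
    per (iter k T) n (iter z.2 T (base (n * z.1))).
  case/memS => zL _; have [g0 gk gE gP] := Lg _ zL.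
  have m0 : (0 < n * z.1)%N by rewrite muln_gt0 n0 g0.
  have [pb _] := baseP _ m0 gP.
  split => //.
  have := per_pow T _ k _ (per_iter z.2 pb); rewrite gE mulnK //.
have eqS : closed_orbits (iter k T) n = F @` [set z | z \in S].
  apply/seteqP; split=> [A hA|A [z zS <-]]; last first.
    apply/(closed_orbitsE _ n _ n0); exists (iter z.2 T (base (n * z.1))).
    by split=> //; exact: (perF z zS).2.
  have [y [py ->]] := (closed_orbitsE _ n A n0).1 hA.
  have [m [pm mE]] := per_k T k n y hk py.
  have m0 : (0 < m)%N := proj1 pm.
  have hm : ~ (exists2 p, P p & (p %| m)%N) by move=> h; exact: (H0 m m0 h y pm).
  have hm' : forall p, p \in P -> ~~ (p %| m)%N.
    by move=> p; rewrite in_setE => Pp; apply/negP => pm'; apply: hm; exists p.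
  have gm : (gcdn m k %| m)%N := dvdn_gcdl m k.
  have g0 : (0 < gcdn m k)%N by rewrite gcdn_gt0 m0.
  have hg : gcdn m k \in L by apply: (L_of P n k hk n0 m (gcdn m k) m0 erefl mE hm').
  have [pb ub] := baseP m m0 hm.
  have [i im yE] := ub y pm.
  have zS : (gcdn m k, i %% gcdn m k) \in S by apply/memS; split => //=; rewrite ltn_pmod.
  exists (gcdn m k, i %% gcdn m k) => //.
  rewrite /F /= -mE.
  apply: (orbit_eq py).
  have [a _ hB] := Bezoutl k m0.
  have e1 : (i %/ gcdn m k * a * k + i =
      i %/ gcdn m k * (gcdn m k + a * k) + i %% gcdn m k)%N.
    set q := i %/ gcdn m k; set j := i %% gcdn m k.
    have di : i = (q * gcdn m k + j)%N := divn_eq i _.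
    rewrite [X in (_ + X)%N = _]di mulnDr (mulnA q a k); lia.
  have e2 : ((i %/ gcdn m k * (gcdn m k + a * k) + i %% gcdn m k) %% m = i %% gcdn m k)%N.
    have [c ->] : exists c, (i %/ gcdn m k * (gcdn m k + a * k) = c * m)%N.
      by apply/dvdnP; exact: dvdn_mull.
    rewrite modnMDl modn_small //.
    by apply: (leq_trans (ltn_pmod i g0)); exact: dvdn_leq.
  have e3 : iter (i %% gcdn m k) T (base m) = iter (i %/ gcdn m k * a) (iter k T) y.
    rewrite -iterM yE -(iterD (i %/ gcdn m k * a * k) i).
    by rewrite (iter_mod T (i %/ gcdn m k * a * k + i) (per_fix pb)) e1 e2.
  by rewrite e3; exact: (orbit_mem _ py).
have injF : {in [set z | z \in S] &, injective F}.
  move=> [g1 j1] [g2 j2]; rewrite !in_setE => z1S z2S eF.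
  have /= [pb1 pz1] := perF _ z1S.
  have /= [pb2 pz2] := perF _ z2S.
  case/memS: (z1S) => /= z1L z1j; case/memS: (z2S) => /= z2L z2j.
  have : F (g1, j1) (iter j1 T (base (n * g1))) := orbit_self pz1.
  rewrite eF => -[s _ e].
  have pe := per_iter j1 pb1.
  have pe2 : per T (n * g2) (iter j1 T (base (n * g1))).
    by rewrite e -iterM; exact: (per_iter (s * k) (per_iter j2 pb2)).
  have eg : g1 = g2 by apply/eqP; rewrite -(eqn_pmul2l n0) (per_uniq pe pe2).
  subst g2.
  have e' : iter j1 T (base (n * g1)) = iter (s * k + j2) T (base (n * g1)).
    by rewrite e -iterM iterD.
  have hm := iter_inj pb1 e'.
  have gm : (g1 %| n * g1)%N := dvdn_mull n (dvdnn g1).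
  have [_ gk _ _] := Lg _ z1L.
  have : j1 = j2 %[mod g1].
    rewrite -(modn_dvdm j1 gm) hm modn_dvdm //.
    by case/dvdnP: gk => c ->; rewrite mulnA modnMDl.
  by rewrite !modn_small // => ->.
have uS : uniq S.
  apply: allpairs_uniq_dep; first exact: (uniqL P n k _ (primes_uniq k) (all_prime_primes k)).
    by move=> g _; exact: iota_uniq.
  by move=> [a b] [c d] _ _ /= [-> ->].
have cardS : ([set z | z \in S] #= `I_(size S))%card.
  have -> : [set z | z \in S] = (nth (0%N, 0%N) S) @` `I_(size S).
    apply/seteqP; split=> [z zS|z [i iS <-]].
      by exists (index z S); [rewrite /= index_mem | rewrite nth_index].
    exact: mem_nth.
  apply: inj_card_eq => i j; rewrite !in_setE /= => iS jS e.
  by apply/eqP; rewrite -(nth_uniq (0%N, 0%N) iS jS uS) e.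
have sizeS : size S = (\sum_(d <- L) d)%N.
  by rewrite size_allpairs_dep sumnE big_map; apply: eq_bigr => g _; rewrite size_iota.
rewrite eqS -sizeS; exact: card_eq_trans (inj_card_eq injF) cardS.
Qed.
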